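(* $\operatorname{add}(\mathcal{N})_{\mathrm{game}^*}^{\mathrm{II}} = \mathfrak{c}$. That is, if $\mathcal{A}\subseteq\omega^\omega$ and Player II has a winning strategy in the anti-localizing* game with respect to $\mathcal{A}$, then $|\mathcal{A}|=\mathfrak{c}$ (and such $\mathcal{A}$ of size $\mathfrak{c}$ exist).
   Context: For $k\in\omega$, $[\omega]^{k+1}$ denotes the set of subsets of $\omega$ of size $k+1$. For $\mathcal{A}\subseteq\omega^\omega$, the anti-localizing* game with respect to $\mathcal{A}$: at round $k$, Player I plays $a_k\in[\omega]^{k+1}$ and then Player II plays $n_k\in\omega$. Player II wins iff $\langle n_k:k\in\omega\rangle\in\mathcal{A}$ and $n_k\notin a_k$ for infinitely many $k$. $\operatorname{add}(\mathcal{N})_{\mathrm{game}^*}^{\mathrm{II}}$ is the least $|\mathcal{A}|$ such that Player II has a winning strategy in this game; $\mathfrak{c}=2^{\aleph_0}$. *)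

(* Defs.v *)
From mathcomp Require Import all_boot.
From mathcomp Require Import finmap.
From mathcomp Require Import boolp classical_sets cardinality.
Set Implicit Arguments. Unset Strict Implicit. Unset Printing Implicit Defensive.
Local Open Scope fset_scope.

(* Round k: Player I plays a_k ∈ [ω]^{k+1} (a finite set of naturals of size k+1),
   then Player II plays n_k ∈ ω.
   A strategy for Player II maps the history (a_0, ..., a_k) of Player I's moves
   to n_k (II's own earlier moves are determined by the strategy). *)
Definition IIstrategy := seq {fset nat} -> nat.

Definition legal_I (a : nat -> {fset nat}) : Prop := forall k, #|` a k| = k.+1.

Definition II_moves (sigma : IIstrategy) (a : nat -> {fset nat}) : nat -> nat :=
  fun k => sigma [seq a i | i <- iota 0 k.+1].

Definition II_wins_play (A : set (nat -> nat)) (a : nat -> {fset nat}) (n : nat -> nat) : Prop :=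
  A n /\ (forall m, exists k, (m <= k)%N /\ n k \notin a k).

Definition winning_II (A : set (nat -> nat)) (sigma : IIstrategy) : Prop :=
  forall a, legal_I a -> II_wins_play A a (II_moves sigma a).

Definition II_has_winning_strategy (A : set (nat -> nat)) : Prop :=
  exists sigma, winning_II A sigma.

(* Main.v *)
Require Import Defs.
From mathcomp Require Import all_boot finmap boolp classical_sets cardinality.
Set Implicit Arguments. Unset Strict Implicit. Unset Printing Implicit Defensive.
Local Open Scope fset_scope.

Definition mset (m i : nat) : {fset nat} := [fset x in iota m i.+1].

Lemma card_mset m i : #|` mset m i| = i.+1.
Proof. by rewrite card_fseq undup_id ?iota_uniq // size_iota. Qed.

Lemma mem_mset m i : m \in mset m i.
Proof. by rewrite /mset inE /= eqxx. Qed.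

Definition pre (p : nat -> {fset nat}) L := [seq p i | i <- iota 0 L].

Lemma size_pre p L : size (pre p L) = L.
Proof. by rewrite size_map size_iota. Qed.

Lemma nth_pre p L i : (i < L)%N -> nth fset0 (pre p L) i = p i.
Proof. by move=> H; rewrite (nth_map 0) ?size_iota // nth_iota. Qed.

Lemma take_pre p n L : (n <= L)%N -> take n (pre p L) = pre p n.
Proof. by move=> H; rewrite /pre -map_take take_iota (minn_idPl H). Qed.

Definition legal_s (s : seq {fset nat}) :=
  forall i, (i < size s)%N -> #|` nth fset0 s i| = i.+1.

Lemma legal_pre p L : legal_I p -> legal_s (pre p L).
Proof. by move=> H i; rewrite size_pre => Hi; rewrite nth_pre. Qed.

Definition extp (s : seq {fset nat}) i := if (i < size s)%N then nth fset0 s i else mset 0 i.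

Lemma pre_extp s : pre (extp s) (size s) = s.
Proof.
apply: (@eq_from_nth _ fset0); rewrite size_pre // => i Hi.
by rewrite nth_pre // /extp Hi.
Qed.

Lemma legal_extp s : legal_s s -> legal_I (extp s).
Proof. by move=> H i; rewrite /extp; case: ifP => Hi; [apply: H|apply: card_mset]. Qed.

Definition Qsplit (sigma : IIstrategy) (s : seq {fset nat}) (tt : seq {fset nat} * seq {fset nat}) :=
  [/\ legal_s tt.1, legal_s tt.2, size tt.1 = size tt.2, (size s < size tt.1)%N &
   [/\ take (size s) tt.1 = s, take (size s) tt.2 = s & sigma tt.1 <> sigma tt.2]].

Lemma split_ex A sigma s : winning_II A sigma -> legal_s s -> exists tt, Qsplit sigma s tt.
Proof.
move=> W Ls; apply: contrapT => Hn.
have Heq : forall t, legal_s t -> (size s < size t)%N -> take (size s) t = s ->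
    sigma t = sigma (pre (extp s) (size t)).
  move=> t Lt St Tt; apply: contrapT => Hne; apply: Hn.
  exists (t, pre (extp s) (size t)); split => //=.
  - exact/legal_pre/legal_extp.
  - by rewrite size_pre.
  - by rewrite take_pre ?pre_extp // ltnW.
pose m j := sigma (pre (extp s) j.+1).
pose a i := if (i < size s)%N then nth fset0 s i else mset (m i) i.
have La : legal_I a by move=> i; rewrite /a; case: ifP => Hi; [apply: Ls|apply: card_mset].
have Ha : pre a (size s) = s.
  apply: (@eq_from_nth _ fset0); rewrite size_pre // => i Hi.
  by rewrite nth_pre // /a Hi.
have [_ Hinf] := W a La.
have [k [Hk Hnot]] := Hinf (size s).
move: Hnot; rewrite /II_moves -/(pre a k.+1).
rewrite Heq ?size_pre //; first by rewrite /a ltnNge Hk /= mem_mset.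
- exact: legal_pre.
- by rewrite take_pre // ltnW.
Qed.

Fixpoint node (f : seq {fset nat} -> seq {fset nat} * seq {fset nat}) (x : nat -> bool) m :=
  if m is m'.+1 then (if x m' then (f (node f x m')).1 else (f (node f x m')).2) else [::].

Section Tree.
Variables (sigma : IIstrategy) (f : seq {fset nat} -> seq {fset nat} * seq {fset nat}).
Hypothesis Hf : forall s, legal_s s -> Qsplit sigma s (f s).

Lemma node_prop x m : legal_s (node f x m) /\ (m <= size (node f x m))%N.
Proof.
elim: m => [|m [L S]] /=; first by split => // i.
have [L1 L2 E Sz [T1 T2 _]] := Hf L.
by case: (x m); split => //; rewrite -?E; apply: leq_ltn_trans S Sz.
Qed.

Lemma node_take x m m' : (m <= m')%N -> take (size (node f x m)) (node f x m') = node f x m.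
Proof.
move=> /subnK <-; elim: (m' - m) => [|d IH]; first by rewrite add0n take_size.
rewrite addSn /=.
have [L1 L2 E Sz [T1 T2 _]] := Hf (proj1 (node_prop x (d + m))).
have S1 : (size (node f x m) <= size (node f x (d + m)))%N.
  by move: (congr1 size IH); rewrite size_take; case: ltnP => [/ltnW H _ | _ ->].
case: ifP => _.
- by rewrite -(take_takel _ S1) T1 IH.
- by rewrite -(take_takel _ S1) T2 IH.
Qed.

Definition play x i := nth fset0 (node f x i.+1) i.

Lemma nth_node x m m' i : (i < size (node f x m))%N -> (i < size (node f x m'))%N ->
  nth fset0 (node f x m) i = nth fset0 (node f x m') i.
Proof.
move=> H1 H2.
rewrite -(node_take x (leq_maxl m m')) -(node_take x (leq_maxr m m')) !nth_take //.
Qed.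

Lemma pre_play x m : pre (play x) (size (node f x m)) = node f x m.
Proof.
apply: (@eq_from_nth _ fset0); rewrite size_pre // => i Hi.
rewrite nth_pre // /play; apply: nth_node => //.
by apply: leq_trans (proj2 (node_prop x i.+1)).
Qed.

Lemma legal_play x : legal_I (play x).
Proof.
move=> i; rewrite /play; have [L S] := node_prop x i.+1; exact: L.
Qed.

Lemma play_inj x y : x <> y -> II_moves sigma (play x) <> II_moves sigma (play y).
Proof.
move=> Hxy.
have Ex : exists m, x m != y m.
  apply: contrapT => H; apply: Hxy; apply: funext => m.
  by apply/eqP; apply: contrapT => Hm; apply: H; exists m; apply/negP.
case: (ex_minnP Ex) => m Hm Hmin.
have Eq : forall k, (k <= m)%N -> node f x k = node f y k.
  elim=> [|k IH] Hk //=.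
  rewrite IH ?(ltnW Hk) //.
  have -> : x k = y k.
    by apply/eqP; apply: contraTT Hk => /Hmin; rewrite -leqNgt.
  done.
have [L1 L2 E Sz [T1 T2 Hne]] := Hf (proj1 (node_prop x m)).
set s := node f x m in L1 L2 E Sz T1 T2 Hne.
set L := size (f s).1.
have HL : forall z, node f z m = s -> size (node f z m.+1) = L ->
   II_moves sigma (play z) L.-1 = sigma (node f z m.+1).
  move=> z _ Hs; rewrite /II_moves -/(pre (play z) L.-1.+1) prednK.
    by rewrite -Hs pre_play.
  by apply: leq_ltn_trans Sz.
move=> Hmv.
have Hx : node f x m.+1 = if x m then (f s).1 else (f s).2 by [].
have Hy : node f y m.+1 = if y m then (f s).1 else (f s).2 by rewrite /= -Eq.
have Sx : size (node f x m.+1) = L by rewrite Hx; case: (x m).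
have Sy : size (node f y m.+1) = L by rewrite Hy; case: (y m).
have := congr1 (fun g => g L.-1) Hmv => /=.
rewrite (HL x erefl Sx) (HL y (esym (Eq m (leqnn m))) Sy) Hx Hy.
by move: Hm; case: (x m); case: (y m) => //= _ /esym.
Qed.

End Tree.

Lemma mem_sumn (s : seq nat) x : x \in s -> (x <= sumn s)%N.
Proof.
elim: s => //= y s IH; rewrite inE => /orP[/eqP ->|/IH H]; first exact: leq_addr.
by apply: leq_trans H _; apply: leq_addl.
Qed.

Definition gcode (h : nat -> nat) (n : nat) : bool :=
  if @choice.unpickle (nat * nat)%type n is Some p then h p.1 == p.2 else false.

Lemma gcode_inj : injective gcode.
Proof.
move=> h h' E; apply: funext => i.
have := congr1 (fun g => g (choice.pickle (i, h i))) E.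
by rewrite /gcode choice.pickleK /= eqxx => /esym/eqP.
Qed.

Theorem mainTheorem11 :
  (forall A : set (nat -> nat), II_has_winning_strategy A ->
     card_eq A [set: nat -> bool]) /\
  (exists A : set (nat -> nat), II_has_winning_strategy A).
Proof.
split.
- move=> A [sigma W].
  have [f Hf] : {f : seq {fset nat} -> seq {fset nat} * seq {fset nat} &
      forall s, legal_s s -> Qsplit sigma s (f s)}.
    apply: (@choice _ _ (fun s tt => legal_s s -> Qsplit sigma s tt)) => s; case: (pselect (legal_s s)) => [L|nL].
      by have [tt H] := split_ex W L; exists tt.
    by exists ([::], [::]).
  rewrite card_eq_le; apply/andP; split.
  + apply: card_le_trans (card_leT A) _.
    apply/pcard_leP; apply/injfunPex; exists gcode => //.
    by move=> x y _ _; apply: gcode_inj.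
  + apply/pcard_leP; apply/injfunPex; exists (fun x => II_moves sigma (play f x)).
      by move=> x _; apply: (W _ (legal_play Hf x)).1.
    move=> x y _ _ E; apply: contrapT => Hne.
    exact: (play_inj Hf Hne E).
- exists setT; exists (fun h => (sumn (enum_fset (last fset0 h))).+1).
  move=> a La; split => // m; exists m; split => //.
  rewrite /II_moves /= last_map.
  have -> : last 0%N (iota 1 m) = m.
    by case: m => // m; rewrite -nth_last size_iota nth_iota.
  by apply/negP => /mem_sumn; rewrite ltnn.
Qed.
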